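(* Let $A\subseteq\mathcal{R}$ be outer measurable and let $(I_n)_{n\ge1}$ be pairwise disjoint intervals in $\mathcal{R}$ with $A\cap I_n=\emptyset$ for every $n$ and $\lim_{n\to\infty}l(I_n)=0$. Then $A\cup\bigcup_{n=1}^\infty I_n$ is outer measurable and $$M_u\Big(A\cup\bigcup_{n=1}^\infty I_n\Big)=M_u(A)+\sum_{n=1}^\infty l(I_n).$$
   Context: $\mathcal{R}$ denotes the Levi-Civita field: functions $x:\mathbb{Q}\to\mathbb{R}$ with left-finite support, with componentwise addition and formal power series multiplication, ordered by $x>0$ iff $x\ne0$ and $x[\min\operatorname{supp}x]>0$; it is a non-Archimedean ordered field extension of $\mathbb{R}$, Cauchy complete in the order topology, in which all limits and series are taken (a series $\sum a_n$ converges iff $a_n\to0$). An interval is a set $[a,b],[a,b),(a,b]$ or $(a,b)$ with $a<b$ in $\mathcal{R}$, of length $l=b-a$. A cover of $A\subseteq\mathcal{R}$ is a sequence of intervals $(S_n)_{n\ge1}$ with $A\subseteq\bigcup_n S_n$ and $\sum_n l(S_n)$ convergent in $\mathcal{R}$. $A$ is called outer measurable if the infimum $\inf\{\sum_n l(S_n): (S_n)\text{ a cover of }A\}$ exists in $\mathcal{R}$; this infimum is then called the outer measure $M_u(A)$. *)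

(* Defs.v *)
From HB Require Import structures.
From mathcomp Require Import all_boot all_order all_algebra.
From mathcomp Require Import boolp classical_sets functions cardinality.
From mathcomp Require Import reals Rstruct.
From Stdlib Require Import Rdefinitions.
Set Implicit Arguments. Unset Strict Implicit. Unset Printing Implicit Defensive.
Import Order.TTheory GRing.Theory Num.Theory.
Local Open Scope classical_set_scope.
Local Open Scope ring_scope.

Notation RR := Rdefinitions.R.

(* ---------------- The Levi-Civita field (additive/order structure) --------
   Elements: functions x : Q -> R with left-finite support, i.e. for every
   q : Q the set {p in supp x | p < q} is finite. *)
Definition left_finite (f : rat -> RR) : Prop :=
  forall q : rat, finite_set [set p : rat | f p != 0 /\ p < q].

Record LC := MkLC { lcf :> rat -> RR ; lcfP : left_finite lcf }.

Lemma left_finite0 : left_finite (fun _ => 0).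
Proof.
move=> q; apply: (sub_finite_set _ (finite_set0 rat)).
by move=> p /= []; rewrite eqxx.
Qed.

Lemma left_finiteD (f g : rat -> RR) :
  left_finite f -> left_finite g -> left_finite (fun p => f p + g p).
Proof.
move=> hf hg q.
apply: (@sub_finite_set _ _ ([set p | f p != 0 /\ p < q] `|` [set p | g p != 0 /\ p < q]));
  last by rewrite finite_setU; split.
move=> p /= [hp pq]; case: (eqVneq (f p) 0) => fp; last by left.
by right; split=> //; move: hp; rewrite fp add0r.
Qed.

Lemma left_finiteN (f : rat -> RR) : left_finite f -> left_finite (fun p => - f p).
Proof.
move=> hf q; apply: (sub_finite_set _ (hf q)).
by move=> p /= [hp pq]; split=> //; rewrite -oppr_eq0.
Qed.

Definition LC0 : LC := MkLC left_finite0.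
Definition LCadd (x y : LC) : LC := MkLC (left_finiteD (lcfP x) (lcfP y)).
Definition LCopp (x : LC) : LC := MkLC (left_finiteN (lcfP x)).
Definition LCsub (x y : LC) : LC := LCadd x (LCopp y).

(* x < y  iff  y - x > 0  iff  (y - x)[min supp (y - x)] > 0, i.e. at the
   first rational q where x and y differ, x q < y q. *)
Definition LClt (x y : LC) : Prop :=
  exists q : rat, x q < y q /\ (forall p : rat, p < q -> x p = y p).
Definition LCle (x y : LC) : Prop := x = y \/ LClt x y.

Definition LCcvg (u : nat -> LC) (l : LC) : Prop :=
  forall a b : LC, LClt a l -> LClt l b ->
    exists N : nat, forall n : nat, leq N n -> LClt a (u n) /\ LClt (u n) b.

Fixpoint LCpsum (u : nat -> LC) (n : nat) : LC :=
  match n with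
  | 0 => LC0
  | n'.+1 => LCadd (LCpsum u n') (u n')
  end.

Definition LCseries (u : nat -> LC) (s : LC) : Prop := LCcvg (LCpsum u) s.

Inductive ikind := CC | CO | OC | OO.

Record LCinterval := MkInterval {
  ileft : LC ; iright : LC ; ikd : ikind ; iltP : LClt ileft iright }.

Definition iset (I : LCinterval) : set LC :=
  match ikd I with
  | CC => [set x | LCle (ileft I) x /\ LCle x (iright I)]
  | CO => [set x | LCle (ileft I) x /\ LClt x (iright I)]
  | OC => [set x | LClt (ileft I) x /\ LCle x (iright I)]
  | OO => [set x | LClt (ileft I) x /\ LClt x (iright I)]
  end.

Definition ilen (I : LCinterval) : LC := LCsub (iright I) (ileft I).

Definition cover_with_sum (A : set LC) (S : nat -> LCinterval) (s : LC) : Prop :=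
  A `<=` \bigcup_n iset (S n) /\ LCseries (fun n => ilen (S n)) s.

Definition cover_sums (A : set LC) : set LC :=
  [set s | exists S : nat -> LCinterval, cover_with_sum A S s].

Definition is_inf (E : set LC) (m : LC) : Prop :=
  (forall s, E s -> LCle m s) /\
  (forall m', (forall s, E s -> LCle m' s) -> LCle m' m).

Definition outer_measure_is (A : set LC) (m : LC) : Prop := is_inf (cover_sums A) m.
Definition outer_measurable (A : set LC) : Prop := exists m, outer_measure_is A m.

(* Main.v *)
Require Import Defs.
From HB Require Import structures.
From mathcomp Require Import all_boot all_order all_algebra.
From mathcomp Require Import boolp classical_sets functions cardinality.
From mathcomp Require Import reals Rstruct ring.
From Stdlib Require Import Rdefinitions.
Set Implicit Arguments. Unset Strict Implicit. Unset Printing Implicit Defensive.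
Import Order.TTheory GRing.Theory Num.Theory.
Local Open Scope classical_set_scope.
Local Open Scope ring_scope.


Lemma LC_ext (x y : LC) : (forall q, x q = y q) -> x = y.
Proof.
case: x y => f hf [g hg] /= h.
have ef : f = g by apply: funext.
subst g; by rewrite (Prop_irrelevance hf hg).
Qed.

Lemma LCaddA : associative LCadd.
Proof. by move=> x y z; apply: LC_ext => q /=; rewrite addrA. Qed.
Lemma LCaddC : commutative LCadd.
Proof. by move=> x y; apply: LC_ext => q /=; rewrite addrC. Qed.
Lemma LCadd0 : left_id LC0 LCadd.
Proof. by move=> x; apply: LC_ext => q /=; rewrite add0r. Qed.
Lemma LCaddN : left_inverse LC0 LCopp LCadd.
Proof. by move=> x; apply: LC_ext => q /=; rewrite addNr. Qed.

HB.instance Definition _ := gen_eqMixin LC.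
HB.instance Definition _ := gen_choiceMixin LC.
HB.instance Definition _ := GRing.isZmodule.Build LC LCaddA LCaddC LCadd0 LCaddN.

Lemma LCaddE (x y : LC) : LCadd x y = x + y. Proof. by []. Qed.
Lemma LC0E : LC0 = 0. Proof. by []. Qed.
Lemma LCoppE (x : LC) : LCopp x = - x. Proof. by []. Qed.
Lemma LCsubE (x y : LC) : LCsub x y = x - y. Proof. by []. Qed.
Lemma LCcD (x y : LC) q : (x + y) q = x q + y q. Proof. by []. Qed.
Lemma LCcN (x : LC) q : (- x) q = - x q. Proof. by []. Qed.
Lemma LCcB (x y : LC) q : (x - y) q = x q - y q. Proof. by []. Qed.
Lemma LCc0 q : (0 : LC) q = 0. Proof. by []. Qed.

Lemma seq_min (b : rat) (s : seq rat) :
  exists2 m, m \in b :: s & forall p, p \in b :: s -> m <= p.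
Proof.
elim: s b => [|c s IH] b.
  by exists b; [rewrite inE|move=> p; rewrite inE => /eqP->].
have [m ms hm] := IH c; case: (leP b m) => hbm.
  exists b; first by rewrite inE eqxx.
  by move=> p; rewrite inE => /orP[/eqP->//|/hm]; apply: le_trans.
exists m; first by rewrite inE ms orbT.
by move=> p; rewrite inE => /orP[/eqP->|/hm//]; exact: ltW.
Qed.

Lemma first_diff (x y : LC) : x <> y ->
  exists q, x q <> y q /\ forall p, p < q -> x p = y p.
Proof.
move=> nxy.
have [q0 hq0] : exists q0, x q0 <> y q0.
  apply: contrapT => h; apply: nxy; apply: LC_ext => q.
  by apply: contrapT => hq; apply: h; exists q.
have fS := lcfP (x - y) (q0 + 1).
have [s es] := (finite_seqP _).1 fS.
have q0s : q0 \in s.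
  have : [set p : rat | (x - y) p != 0 /\ p < q0 + 1] q0.
    split; last by rewrite ltrDl.
    by rewrite LCcB subr_eq0; apply/eqP.
  by rewrite es.
have [m ms hm] : exists2 m, m \in s & forall p, p \in s -> m <= p.
  case: s es q0s => [|b s] // es _; have [m ms hm] := seq_min b s.
  by exists m.
have : [set` s] m by [].
rewrite -es /= => -[hm0 hmlt]; exists m; split.
  by move=> e; move: hm0; rewrite ?LCcB e subrr eqxx.
move=> p hp; apply: contrapT => hxy.
have : [set` s] p.
  rewrite -es; split; first by rewrite ?LCcB subr_eq0; apply/eqP.
  exact: lt_trans hp hmlt.
by move=> /hm; rewrite leNgt hp.
Qed.

Lemma LClt_irr (x : LC) : ~ LClt x x.
Proof. by case=> q []; rewrite ltxx. Qed.

Lemma LClt_trans (x y z : LC) : LClt x y -> LClt y z -> LClt x z.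
Proof.
move=> [q1 [h1 e1]] [q2 [h2 e2]].
case: (ltgtP q1 q2) => hq.
- exists q1; split; first by rewrite -(e2 _ hq).
  by move=> p hp; rewrite e1 // e2 //; exact: lt_trans hp hq.
- exists q2; split; first by rewrite (e1 _ hq).
  by move=> p hp; rewrite e1 ?e2 //; exact: lt_trans hp hq.
- subst q2; exists q1; split; first exact: lt_trans h1 h2.
  by move=> p hp; rewrite e1 ?e2.
Qed.

Lemma LClt_total (x y : LC) : x <> y -> LClt x y \/ LClt y x.
Proof.
move=> /first_diff [q [hq e]]; case: (ltgtP (x q) (y q)) => h.
- by left; exists q.
- by right; exists q; split=> // p hp; rewrite e.
- by case: hq.
Qed.

Definition LCltb (x y : LC) : bool := `[< LClt x y >].
Definition LCleb (x y : LC) : bool := (x == y) || LCltb x y.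

Lemma LCltb_irr : irreflexive LCltb.
Proof. by move=> x; apply/asboolP; exact: LClt_irr. Qed.
Lemma LCltb_trans : transitive LCltb.
Proof. by move=> y x z /asboolP h1 /asboolP h2; apply/asboolP; exact: LClt_trans h1 h2. Qed.

Notation LC_disp := ring_display.

HB.instance Definition _ := Order.LtLe_isPOrder.Build LC_disp LC (le := LCleb) (lt := LCltb)
  (fun x y => erefl) LCltb_irr LCltb_trans.

Lemma LCle_total : total (<=%O : rel LC).
Proof.
move=> x y; case: (eqVneq x y) => [->|nxy]; first by rewrite lexx.
case: (LClt_total (elimN eqP nxy)) => h; apply/orP; [left|right];
  rewrite le_eqVlt; apply/orP; right; exact: (asboolT h).
Qed.

HB.instance Definition _ := Order.POrder_isTotal.Build LC_disp LC LCle_total.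


Lemma LCltP (x y : LC) : LClt x y <-> x < y.
Proof.
by change (x < y) with (LCltb x y); split => [h|]; [apply/asboolP|move/asboolP].
Qed.

Lemma LCleP (x y : LC) : LCle x y <-> x <= y.
Proof.
split; first by case=> [->|/LCltP h]; [exact: lexx|exact: ltW].
by rewrite le_eqVlt => /orP[/eqP->|/LCltP h]; [left|right].
Qed.

Lemma ltD2r (z x y : LC) : (x + z < y + z) = (x < y).
Proof.
apply/idP/idP => /LCltP [q [h e]]; apply/LCltP; exists q.
  split; first by move: h; rewrite !LCcD ltrD2r.
  by move=> p hp; move: (e p hp); rewrite !LCcD => /addIr.
split; first by rewrite !LCcD ltrD2r.
by move=> p hp; rewrite !LCcD e.
Qed.

Lemma leD2r (z x y : LC) : (x + z <= y + z) = (x <= y).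
Proof. by rewrite !leNgt ltD2r. Qed.
Lemma ltD2l (z x y : LC) : (z + x < z + y) = (x < y).
Proof. by rewrite ![z + _]addrC ltD2r. Qed.
Lemma leD2l (z x y : LC) : (z + x <= z + y) = (x <= y).
Proof. by rewrite ![z + _]addrC leD2r. Qed.

Lemma subge0 (x y : LC) : (0 <= y - x) = (x <= y).
Proof. by rewrite -(leD2r x 0 (y - x)) subrK add0r. Qed.
Lemma subgt0 (x y : LC) : (0 < y - x) = (x < y).
Proof. by rewrite -(ltD2r x 0 (y - x)) subrK add0r. Qed.

Lemma leD (x y z w : LC) : x <= y -> z <= w -> x + z <= y + w.
Proof.
move=> h1 h2; apply: (le_trans (y := y + z)); first by rewrite leD2r.
by rewrite leD2l.
Qed.
Lemma ltD (x y z w : LC) : x < y -> z <= w -> x + z < y + w.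
Proof.
move=> h1 h2; apply: (lt_le_trans (y := y + z)); first by rewrite ltD2r.
by rewrite leD2l.
Qed.
Lemma ltDle (x y z w : LC) : x <= y -> z < w -> x + z < y + w.
Proof. by move=> h1 h2; rewrite addrC (addrC y); exact: ltD. Qed.
Lemma addge0 (x y : LC) : 0 <= x -> 0 <= y -> 0 <= x + y.
Proof. by move=> h1 h2; rewrite -(addr0 0); exact: leD. Qed.
Lemma oppge0 (x : LC) : (0 <= - x) = (x <= 0).
Proof. by rewrite -subge0 sub0r. Qed.
Lemma LClerN2 (x y : LC) : (- x <= - y) = (y <= x).
Proof. by rewrite -(leD2r (x + y) (- x) (- y)) addKr (addrC x y) addKr. Qed.
Lemma LCltrN2 (x y : LC) : (- x < - y) = (y < x).
Proof. by rewrite !ltNge LClerN2. Qed.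

Lemma left_finite_delta (q : rat) : left_finite (fun p => if p == q then (1:RR) else 0).
Proof.
move=> r; apply: (sub_finite_set _ (finite_set1 q)).
by move=> p /= []; case: (eqVneq p q) => [-> //|_]; rewrite eqxx.
Qed.
Definition delta (q : rat) : LC := MkLC (left_finite_delta q).
Lemma deltaE q p : delta q p = if p == q then 1 else 0. Proof. by []. Qed.

Lemma delta_gt0 q : 0 < delta q.
Proof.
apply/LCltP; exists q; split; first by rewrite deltaE eqxx LCc0 ltr01.
by move=> p hp; rewrite deltaE LCc0 (lt_eqF hp).
Qed.

Definition agree (x y : LC) (q : rat) := forall p, p <= q -> x p = y p.

Lemma agree_sym x y q : agree x y q -> agree y x q.
Proof. by move=> h p hp; rewrite h. Qed.
Lemma agree_trans x y z q : agree x y q -> agree y z q -> agree x z q.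
Proof. by move=> h1 h2 p hp; rewrite h1 ?h2. Qed.
Lemma agree_le x y q q' : q' <= q -> agree x y q -> agree x y q'.
Proof. by move=> hq h p hp; apply: h; exact: le_trans hp hq. Qed.

Definition cvgA (u : nat -> LC) (L : LC) :=
  forall q : rat, exists N : nat, forall n : nat, (leq (N) (n)) -> agree (u n) L q.

Lemma between_agree (a v b : LC) (r : rat) :
  LClt a v -> LClt v b -> (forall p, p < r -> a p = b p) ->
  forall p, p < r -> v p = a p.
Proof.
move=> [q1 [h1 e1]] [q2 [h2 e2]] eab.
suff hq1 : r <= q1 by move=> p hp; rewrite e1 //; exact: lt_le_trans hp hq1.
rewrite leNgt; apply/negP => hq1.
case: (ltgtP q1 q2) => hq.
- by move: h1; rewrite (e2 _ hq) -eab // ltxx.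
- have hq2 : q2 < r := lt_trans hq hq1.
  by move: h2; rewrite -(e1 _ hq) eab // ltxx.
- subst q2; move: (lt_trans h1 h2); rewrite eab // ltxx //.
Qed.

Lemma lt_agree (a L : LC) : LClt a L ->
  exists q, forall x, agree x L q -> LClt a x.
Proof.
move=> [q [h e]]; exists q => x hx; exists q; split; first by rewrite hx.
by move=> p hp; rewrite e // hx //; exact: ltW.
Qed.

Lemma gt_agree (b L : LC) : LClt L b ->
  exists q, forall x, agree x L q -> LClt x b.
Proof.
move=> [q [h e]]; exists q => x hx; exists q; split; first by rewrite hx.
by move=> p hp; rewrite -e // hx //; exact: ltW.
Qed.

Lemma cvgP (u : nat -> LC) (L : LC) : LCcvg u L <-> cvgA u L.
Proof.
split.
  move=> h q.
  pose a := L - delta (q + 1); pose b := L + delta (q + 1).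
  have aL : LClt a L.
    exists (q + 1); split.
      by rewrite /a LCcB deltaE eqxx gtrBl ltr01.
    by move=> p hp; rewrite /a LCcB deltaE (lt_eqF hp) subr0.
  have Lb : LClt L b.
    exists (q + 1); split.
      by rewrite /b LCcD deltaE eqxx ltrDl ltr01.
    by move=> p hp; rewrite /b LCcD deltaE (lt_eqF hp) addr0.
  have [N hN] := h a b aL Lb; exists N => n /hN [h1 h2] p hp.
  have hp' : p < q + 1 by apply: le_lt_trans hp _; rewrite ltrDl ltr01.
  rewrite (between_agree h1 h2 _ hp') /a ?LCcB ?deltaE ?(lt_eqF hp') ?subr0 //.
  by move=> p' hp'' /=; rewrite (lt_eqF hp'') subr0 addr0.
move=> h a b aL Lb.
have [q1 h1] := lt_agree aL; have [q2 h2] := gt_agree Lb.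
have [N hN] := h (Num.max q1 q2); exists N => n /hN hn; split.
  by apply: h1; apply: agree_le hn; rewrite le_max lexx.
by apply: h2; apply: agree_le hn; rewrite le_max lexx orbT.
Qed.

Lemma cvgA_unique u L1 L2 : cvgA u L1 -> cvgA u L2 -> L1 = L2.
Proof.
move=> h1 h2; apply: LC_ext => q.
have [N1 hN1] := h1 q; have [N2 hN2] := h2 q.
have n1 : (leq (N1) (maxn N1 N2)) by rewrite leq_maxl.
have n2 : (leq (N2) (maxn N1 N2)) by rewrite leq_maxr.
by rewrite -(hN1 _ n1 q (lexx _)) (hN2 _ n2 q (lexx _)).
Qed.

Definition cauchyA (u : nat -> LC) :=
  forall q : rat, exists N : nat, forall n m : nat, (leq (N) (n)) -> (leq (N) (m)) -> agree (u n) (u m) q.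

Lemma cauchy_cvg u : cauchyA u -> exists L, cvgA u L.
Proof.
move=> h; have /choice [N hN] := h.
have key : forall p q, p <= q -> u (N p) p = u (N q) p.
  move=> p q hpq; pose n := maxn (N p) (N q).
  rewrite (hN p (N p) n (leqnn _) (leq_maxl _ _) p (lexx _)).
  by rewrite (hN q (N q) n (leqnn _) (leq_maxr _ _) p hpq).
have lf : left_finite (fun p => u (N p) p).
  move=> q; apply: (sub_finite_set _ (lcfP (u (N q)) q)).
  by move=> p /= [h1 h2]; split=> //; rewrite -key //; exact: ltW.
exists (MkLC lf) => q; exists (N q) => n hn p hp /=.
by rewrite (key p q hp) (hN q n (N q) hn (leqnn _) p hp).
Qed.

Lemma LCpsumE u n : LCpsum u n.+1 = LCpsum u n + u n. Proof. by []. Qed.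
Lemma LCpsum0 u : LCpsum u 0 = 0. Proof. by []. Qed.

Definition tendsto0 (u : nat -> LC) := cvgA u 0.

Lemma series_cvg u : tendsto0 u -> exists s, LCseries u s.
Proof.
move=> h.
suff : cauchyA (LCpsum u) by move=> /cauchy_cvg [L hL]; exists L; apply/cvgP.
move=> q; have [N hN] := h q; exists N.
suff H : forall k p, p <= q -> LCpsum u (N + k) p = LCpsum u N p.
  move=> n m hn hm p hp.
  by rewrite -(subnKC hn) -(subnKC hm) !H.
move=> k p hp; elim: k => [|k IH]; first by rewrite addn0.
by rewrite addnS LCpsumE LCcD IH (hN (N + k)%N (leq_addr _ _) p hp) LCc0 addr0.
Qed.

Lemma series_terms u s : LCseries u s -> tendsto0 u.
Proof.
move=> /cvgP h q; have [N hN] := h q; exists N => n hn p hp.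
have e : u n = LCpsum u n.+1 - LCpsum u n by rewrite LCpsumE addrC addKr.
by rewrite e LCcB (hN _ (leqW hn) p hp) (hN _ hn p hp) subrr.
Qed.

Lemma seriesA u s : LCseries u s <-> cvgA (LCpsum u) s.
Proof. exact: cvgP. Qed.

Lemma LCpsumD u v n : LCpsum (fun k => u k + v k) n = LCpsum u n + LCpsum v n.
Proof.
elim: n => [|n IH]; first by rewrite !LCpsum0 addr0.
by rewrite !LCpsumE IH addrACA.
Qed.
Lemma LCpsumN u n : LCpsum (fun k => - u k) n = - LCpsum u n.
Proof.
elim: n => [|n IH]; first by rewrite !LCpsum0 oppr0.
by rewrite !LCpsumE IH opprD.
Qed.

Lemma cvgA_D u v a b : cvgA u a -> cvgA v b -> cvgA (fun n => u n + v n) (a + b).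
Proof.
move=> h1 h2 q; have [N1 hN1] := h1 q; have [N2 hN2] := h2 q.
exists (maxn N1 N2) => n hn p hp; rewrite !LCcD.
rewrite (hN1 n _ p hp) ?(hN2 n _ p hp) //.
  exact: leq_trans (leq_maxr _ _) hn.
exact: leq_trans (leq_maxl _ _) hn.
Qed.
Lemma cvgA_N u a : cvgA u a -> cvgA (fun n => - u n) (- a).
Proof. by move=> h q; have [N hN] := h q; exists N => n hn p hp; rewrite !LCcN hN. Qed.
Lemma cvgA_cst a : cvgA (fun _ => a) a.
Proof. by move=> q; exists 0%N. Qed.

Lemma seriesD u v a b : LCseries u a -> LCseries v b -> LCseries (fun n => u n + v n) (a + b).
Proof.
move=> /seriesA h1 /seriesA h2; apply/seriesA.
by move=> q; have [N hN] := cvgA_D h1 h2 q; exists N => n hn; rewrite LCpsumD; exact: hN.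
Qed.
Lemma seriesN u a : LCseries u a -> LCseries (fun n => - u n) (- a).
Proof.
move=> /seriesA h; apply/seriesA.
by move=> q; have [N hN] := cvgA_N h q; exists N => n hn; rewrite LCpsumN; exact: hN.
Qed.
Lemma series_unique u a b : LCseries u a -> LCseries u b -> a = b.
Proof. by move=> /seriesA h1 /seriesA h2; exact: cvgA_unique h1 h2. Qed.
Lemma series_ext u v a : (forall n, u n = v n) -> LCseries u a -> LCseries v a.
Proof.
move=> e; have -> // : u = v by apply: funext.
Qed.

Lemma cvg_ge u L a N0 : cvgA u L -> (forall n, (leq (N0) (n)) -> a <= u n) -> a <= L.
Proof.
move=> /cvgP h ha; rewrite leNgt; apply/negP => /LCltP La.
have lL : LClt (L - delta 0) L.
  by apply/LCltP; rewrite -subgt0 opprB addrC subrK delta_gt0.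
have [N hN] := h _ _ lL La.
have [_ /LCltP] := hN (maxn N N0) (leq_maxl _ _).
by rewrite ltNge ha // leq_maxr.
Qed.
Lemma cvg_le u L a N0 : cvgA u L -> (forall n, (leq (N0) (n)) -> u n <= a) -> L <= a.
Proof.
move=> h ha; rewrite -LClerN2; apply: (cvg_ge (N0 := N0) (cvgA_N h)).
by move=> n hn; rewrite LClerN2 ha.
Qed.

Lemma psum_le u v n : (forall i, u i <= v i) -> LCpsum u n <= LCpsum v n.
Proof. by move=> h; elim: n => [|n IH] //=; exact: leD. Qed.

Lemma psum_ge0 u n : (forall i, 0 <= u i) -> 0 <= LCpsum u n.
Proof. by move=> h; elim: n => [|n IH] //=; exact: addge0. Qed.

Lemma psum_shift u k n :
  LCpsum u (addn k n) = LCpsum u k + LCpsum (fun i => u (addn k i)) n.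
Proof.
elim: n => [|n IH]; first by rewrite addn0 /= addr0.
by rewrite addnS /= IH addrA.
Qed.

Lemma psum_mono u m n : (forall i, 0 <= u i) -> leq m n -> LCpsum u m <= LCpsum u n.
Proof.
move=> h hmn; rewrite -(subnKC hmn) psum_shift -{1}(addr0 (LCpsum u m)) leD2l.
by apply: psum_ge0.
Qed.

Lemma series_ge_psum u s n : (forall i, 0 <= u i) -> LCseries u s -> LCpsum u n <= s.
Proof.
move=> h /seriesA hs; apply: (cvg_ge (N0 := n) hs) => m hm; exact: psum_mono.
Qed.

Lemma series_ge0 u s : (forall i, 0 <= u i) -> LCseries u s -> 0 <= s.
Proof. by move=> h hs; apply: le_trans (series_ge_psum 0 h hs). Qed.

Lemma series_le u v a b : (forall i, u i <= v i) -> LCseries u a -> LCseries v b -> a <= b.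
Proof.
move=> h ha hb; have := seriesD hb (seriesN ha).
move=> /series_ge0; rewrite subge0; apply => i; rewrite subge0; exact: h.
Qed.

Lemma agree0_le (x y : LC) q : 0 <= x -> x <= y -> agree y 0 q -> agree x 0 q.
Proof.
move=> x0 xy hy p hp; apply: contrapT => hxp.
have xn0 : x != 0 by apply/eqP => e; apply: hxp; rewrite e.
have /LCltP [q1 [h1 e1]] : 0 < x by rewrite lt_def xn0 x0.
have q1p : q1 <= p.
  rewrite leNgt; apply/negP => hpq; apply: hxp; by rewrite -e1.
move: xy; rewrite -subge0 => /LCleP [e|hlt].
  have : (y - x) q1 = 0 by rewrite -e.
  rewrite LCcB hy; last exact: le_trans q1p hp.
  by rewrite LCc0 sub0r => /eqP; rewrite oppr_eq0 => /eqP e'; move: h1; rewrite e' LCc0 ltxx.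
apply: (@LClt_irr 0); apply: (LClt_trans hlt).
exists q1; split.
  rewrite LCcB hy ?LCc0; last exact: le_trans q1p hp.
  by rewrite sub0r oppr_lt0.
move=> p' hp'; rewrite LCcB hy; last exact: le_trans (ltW hp') (le_trans q1p hp).
by rewrite -(e1 _ hp') !LCc0 subrr.
Qed.

Lemma tendsto0_squeeze (a b : nat -> LC) :
  (forall n, 0 <= a n) -> (forall n, a n <= b n) -> tendsto0 b -> tendsto0 a.
Proof.
move=> h0 h1 hb q; have [N hN] := hb q; exists N => n hn.
exact: agree0_le (h0 n) (h1 n) (hN n hn).
Qed.

Definition interleave (a b : nat -> LC) (n : nat) : LC :=
  if odd n then b n./2 else a n./2.

Lemma half_dbl k : (k.*2)./2 = k.
Proof. by have := half_bit_double k false. Qed.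
Lemma half_dblS k : (k.*2).+1./2 = k.
Proof. by have := half_bit_double k true. Qed.

Lemma psum_interleave a b k :
  LCpsum (interleave a b) k.*2 = LCpsum a k + LCpsum b k /\
  LCpsum (interleave a b) (k.*2).+1 = LCpsum a k.+1 + LCpsum b k.
Proof.
elim: k => [|k [IH1 IH2]].
  by split; rewrite /= /interleave /= ?add0r ?addr0.
have e1 : LCpsum (interleave a b) (k.+1).*2 = LCpsum a k.+1 + LCpsum b k.+1.
  rewrite doubleS /= -/(LCpsum (interleave a b) (k.*2).+1) IH2.
  by rewrite /interleave /= odd_double /= uphalf_double !LCaddE addrA.
split=> //; rewrite (LCpsumE _ ((k.+1).*2)) e1 (LCpsumE a k.+1).
by rewrite /interleave odd_double half_dbl addrAC.
Qed.

Lemma series_interleave a b A B :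
  LCseries a A -> LCseries b B -> LCseries (interleave a b) (A + B).
Proof.
move=> /seriesA ha /seriesA hb; apply/seriesA => q.
have [N1 hN1] := ha q; have [N2 hN2] := hb q.
exists (maxn N1 N2).*2.+2 => n hn.
have hk : leq (maxn N1 N2) n./2.
  by rewrite -(half_dbl (maxn N1 N2)); apply: half_leq; apply: leq_trans hn; rewrite ltnW.
have k1 : leq N1 n./2 := leq_trans (leq_maxl _ _) hk.
have k2 : leq N2 n./2 := leq_trans (leq_maxr _ _) hk.
have [o|o] := boolP (odd n).
  have -> : n = (n./2.*2).+1 by rewrite -{1}(odd_double_half n) o.
  rewrite (psum_interleave a b n./2).2 => p hp.
  by rewrite LCcD (hN1 _ (leqW k1) p hp) (hN2 _ k2 p hp).
have -> : n = (n./2.*2) by rewrite -{1}(odd_double_half n) (negbTE o).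
rewrite (psum_interleave a b n./2).1 => p hp.
by rewrite LCcD (hN1 _ k1 p hp) (hN2 _ k2 p hp).
Qed.

Ltac lceq := apply: LC_ext => ?; rewrite ?(LCcD, LCcN, LCcB, LCc0) /=; ring.


Definition hlen (a b : LC) : LC := Order.max 0 (b - a).

Lemma hlen_ge0 a b : 0 <= hlen a b.
Proof. by rewrite le_max lexx. Qed.
Lemma hlen_ge a b : b - a <= hlen a b.
Proof. by rewrite le_max lexx orbT. Qed.
Lemma hlen_id a b : a <= b -> hlen a b = b - a.
Proof. by move=> h; rewrite /hlen max_r // subge0. Qed.
Lemma hlen0 a b : b <= a -> hlen a b = 0.
Proof. by move=> h; rewrite /hlen max_l // -oppge0 opprB subge0. Qed.
Lemma hlen_mono a b a' b' : a' <= a -> b <= b' -> hlen a b <= hlen a' b'.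
Proof.
move=> h1 h2; apply: le_max2 => //; apply: leD => //; by rewrite LClerN2.
Qed.

Definition phi (c e x : LC) : LC := Order.min (Order.max x c) e.

Lemma phi_ge c e x : c <= e -> c <= phi c e x.
Proof. by move=> ce; rewrite le_min le_max lexx orbT ce. Qed.
Lemma phi_le c e x : phi c e x <= e.
Proof. by rewrite ge_min lexx orbT. Qed.
Lemma phi_mono c e x y : x <= y -> phi c e x <= phi c e y.
Proof. by move=> h; apply: le_min2 => //; exact: le_max2. Qed.

Definition mu (c e p q : LC) : LC := hlen (Order.max c p) (Order.min e q).

Lemma mu_ge0 c e p q : 0 <= mu c e p q. Proof. exact: hlen_ge0. Qed.

Lemma mine_le (e q : LC) : Order.min e q <= e. Proof. by rewrite ge_min lexx. Qed.
Lemma minq_le (e q : LC) : Order.min e q <= q. Proof. by rewrite ge_min lexx orbT. Qed.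
Lemma maxc_ge (c p : LC) : c <= Order.max c p. Proof. by rewrite le_max lexx. Qed.
Lemma maxp_ge (c p : LC) : p <= Order.max c p. Proof. by rewrite le_max lexx orbT. Qed.

Lemma mu_empty c e p q : e < c -> mu c e p q = 0.
Proof.
move=> ec; apply: hlen0.
exact: le_trans (mine_le e q) (le_trans (ltW ec) (maxc_ge c p)).
Qed.

Lemma mu_phi c e p q : c <= e -> mu c e p q = hlen (phi c e p) (phi c e q).
Proof.
move=> ce; case: (leP p e) => pe; last first.
  rewrite /mu hlen0; last exact: le_trans (mine_le e q) (le_trans (ltW pe) (maxp_ge c p)).
  rewrite hlen0 //; rewrite /phi (min_r (x := Order.max p c)) ?phi_le //.
  exact: le_trans (ltW pe) (maxc_ge p c).
case: (leP c q) => cq; last first.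
  rewrite /mu hlen0; last exact: le_trans (minq_le e q) (le_trans (ltW cq) (maxc_ge c p)).
  rewrite hlen0 //; rewrite /phi (max_r (x := q)) ?(ltW cq) // (min_l ce).
  exact: phi_ge.
rewrite /phi (min_l (x := Order.max p c)); last by rewrite ge_max pe ce.
by rewrite (max_l (x := q)) // /mu maxC minC.
Qed.

Lemma mu_add c e p r q : p <= r -> r <= q -> mu c e p q = mu c e p r + mu c e r q.
Proof.
move=> pr rq; case: (leP c e) => ce; last by rewrite !mu_empty // addr0.
rewrite !mu_phi // !hlen_id; try exact: phi_mono.
  lceq.
exact: phi_mono (le_trans pr rq).
Qed.

Lemma mu_mono c e p q p' q' : p' <= p -> q <= q' -> mu c e p q <= mu c e p' q'.
Proof. by move=> h1 h2; apply: hlen_mono; [exact: le_max2|exact: le_min2]. Qed.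

Lemma mu_le_len c e p q : mu c e p q <= hlen c e.
Proof. by apply: hlen_mono; [rewrite le_max lexx|rewrite ge_min lexx]. Qed.

Lemma mu_split3 c e j1 j2 : c <= e -> j1 <= j2 ->
  mu c e c j1 + mu c e j1 j2 + mu c e j2 e = e - c.
Proof.
move=> ce j12; rewrite !mu_phi //.
have pc : phi c e c = c by rewrite /phi maxxx min_l.
have pe : phi c e e = e by rewrite /phi max_l // minxx.
rewrite pc pe !hlen_id ?phi_ge ?phi_le ?phi_mono //; lceq.
Qed.

Lemma maxsub_le (x y : LC) : Order.max x y - x = hlen x y.
Proof.
case: (leP x y) => h; first by rewrite hlen_id.
by rewrite subrr hlen0 // ltW.
Qed.

Lemma min_addr (v e eta : LC) : 0 <= eta ->
  Order.min v (e + eta) <= Order.min e v + eta.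
Proof.
move=> h; case: (leP e v) => ev.
  by rewrite ge_min lexx orbT.
apply: le_trans (mine_le v (e + eta)) _.
by rewrite -{1}(addr0 v) leD2l.
Qed.

Lemma max_subr (u c eta : LC) : 0 <= eta ->
  Order.max c u - eta <= Order.max u (c - eta).
Proof.
move=> h; have h' : - eta <= 0 by rewrite -oppge0 opprK.
case: (leP c u) => cu.
  rewrite le_max; apply/orP; left.
  by rewrite -{2}(addr0 u) leD2l.
by rewrite le_max lexx orbT.
Qed.

Lemma middle_len u v c e eta : u <= v -> 0 <= eta ->
  Order.max (Order.min v (Order.max u (c - eta))) (Order.min v (e + eta))
  - Order.min v (Order.max u (c - eta)) <= mu c e u v + (eta + eta).
Proof.
move=> uv h; rewrite maxsub_le.
set a := Order.min v (Order.max u (c - eta)); set m := Order.min v (e + eta).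
case: (leP m a) => ma.
  rewrite hlen0 //; apply: addge0; [exact: mu_ge0|exact: addge0].
rewrite hlen_id; last exact: ltW.
have av : a < v by apply: lt_le_trans ma _; rewrite ge_min lexx.
have ea : a = Order.max u (c - eta).
  move: av; rewrite /a; case: (leP v (Order.max u (c - eta))) => hv.
    by rewrite ltxx.
  by [].
apply: (le_trans (y := (Order.min e v + eta) - (Order.max c u - eta))).
  apply: leD; first exact: min_addr.
  by rewrite LClerN2 ea; apply: max_subr.
have -> : Order.min e v + eta - (Order.max c u - eta) =
          (Order.min e v - Order.max c u) + (eta + eta) by lceq.
by rewrite leD2r /mu hlen_ge.
Qed.

Lemma left_finite_scale (r : RR) (x : LC) : left_finite (fun q => r * x q).
Proof.
move=> q; apply: (sub_finite_set _ (lcfP x q)).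
by move=> p /= [h1 h2]; split=> //; apply: contraNneq h1 => ->; rewrite mulr0.
Qed.
Definition LCscale (r : RR) (x : LC) : LC := MkLC (left_finite_scale r x).

Lemma scale_gt0 r x : 0 < r -> 0 < x -> 0 < LCscale r x.
Proof.
move=> r0 /LCltP [q [h e]]; apply/LCltP; exists q; split.
  by move: h; rewrite /= ?LCc0 => h; rewrite mulr_gt0.
by move=> p hp; rewrite /= -(e p hp) LCc0 mulr0.
Qed.

Definition quarter (x : LC) := LCscale (4%:R^-1) x.
Lemma quarter_gt0 x : 0 < x -> 0 < quarter x.
Proof. by move=> h; apply: scale_gt0 => //; rewrite invr_gt0 ltr0n. Qed.
Lemma quarterK x : quarter x + quarter x + quarter x + quarter x = x.
Proof.
apply: LC_ext => q; rewrite !LCcD /=.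
have h4 : (4%:R : RR) != 0 by rewrite pnatr_eq0.
have e4 : (4%:R^-1 : RR) + 4%:R^-1 + 4%:R^-1 + 4%:R^-1 = 1.
  by field.
by rewrite -!mulrDl e4 mul1r.
Qed.

Lemma delta_tendsto0 : tendsto0 (fun n : nat => delta n%:R).
Proof.
move=> q; exists (Num.bound `|q|) => n hn p hp.
rewrite deltaE LCc0; case: eqP => // e; exfalso.
have : q < n%:R.
  apply: le_lt_trans (ler_norm q) _; apply: lt_le_trans (archi_boundP (normr_ge0 q)) _.
  by rewrite ler_nat.
by rewrite -e ltNge hp.
Qed.


Lemma le_subr (x y z : LC) : x + y <= z -> y <= z - x.
Proof. by move=> h; rewrite -(leD2l x y (z - x)) (addrC x (z - x)) subrK. Qed.

Lemma pick2 (SL SR : nat -> LC) lL lR g :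
  (forall N N', leq N N' -> SL N <= SL N') ->
  (forall N N', leq N N' -> SR N <= SR N') ->
  (forall N, SL N + SR N + (g + g) <= lL + lR) ->
  (forall N, SL N + g <= lL) \/ (forall N, SR N + g <= lR).
Proof.
move=> mL mR h; apply: contrapT => /not_orP [/existsNP [N1 /negP h1] /existsNP [N2 /negP h2]].
move: h1 h2; rewrite -!ltNge => h1 h2.
pose N := maxn N1 N2.
have h1' : lL < SL N + g := lt_le_trans h1 (leD (mL _ _ (leq_maxl _ _)) (lexx _)).
have h2' : lR < SR N + g := lt_le_trans h2 (leD (mR _ _ (leq_maxr _ _)) (lexx _)).
have := ltD h1' (ltW h2'); rewrite ltNge.
have -> : SL N + g + (SR N + g) = SL N + SR N + (g + g) by rewrite addrACA.
by rewrite h.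
Qed.

Record st := St { sk : nat ; su : LC ; sv : LC ; sg : LC }.

Section Core.
Variables (c e : nat -> LC) (T j1 j2 : LC).
Hypothesis hT : LCseries (fun i => hlen (c i) (e i)) T.

Let hs i := hlen (c i) (e i).
Let tau k := T - LCpsum hs k.
Let S k u v N := LCpsum (fun i => mu (c (addn k i)) (e (addn k i)) u v) N.

Lemma tau_ge0 k : 0 <= tau k.
Proof. by rewrite /tau subge0; apply: series_ge_psum hT => i; exact: hlen_ge0. Qed.

Lemma S_ge0 k u v N : 0 <= S k u v N.
Proof. by apply: psum_ge0 => i; exact: mu_ge0. Qed.

Lemma S_mono k u v N N' : leq N N' -> S k u v N <= S k u v N'.
Proof. by apply: psum_mono => i; exact: mu_ge0. Qed.

Lemma tailb k u v N : S k u v N <= tau k.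
Proof.
apply: le_trans (psum_le N (fun i => mu_le_len (c (addn k i)) (e (addn k i)) u v)) _.
apply: le_subr; rewrite -(psum_shift hs k N).
by apply: series_ge_psum hT => i; exact: hlen_ge0.
Qed.

Lemma S_step k u v N : S k u v N.+1 = mu (c k) (e k) u v + S k.+1 u v N.
Proof.
rewrite /S -add1n psum_shift /= LCaddE LC0E add0r addn0.
by congr (_ + _); congr LCpsum; apply: funext => i; rewrite addnA addn1.
Qed.

Definition Inv (s : st) :=
  [/\ j1 < su s, su s <= sv s, sv s < j2, 0 < sg s &
   (forall i x, (i < sk s)%nat -> su s <= x -> x <= sv s -> ~ (c i <= x /\ x <= e i)) /\
   forall N, S (sk s) (su s) (sv s) N + sg s <= sv s - su s].

Definition Next (s s' : st) :=
  [/\ Inv s', sk s' = (sk s).+1, su s <= su s', sv s' <= sv s &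
      sv s' - su s' <= (tau (sk s') + sg s') + (tau (sk s') + sg s') /\
      sg s' <= delta (sk s')%:R].

Lemma finish (s : st) p q g' :
  Inv s -> su s <= p -> q <= sv s -> 0 < g' -> g' <= delta (sk s).+1%:R ->
  (forall N, S (sk s).+1 p q N + g' <= q - p) ->
  (forall x, p <= x -> x <= q -> ~ (c (sk s) <= x /\ x <= e (sk s))) ->
  exists s', Next s s'.
Proof.
case: s => k u v g; rewrite /Inv /= => -[h1 h2 h3 h4 [h5 h6]] up qv g0 gd hS hav.
have pq : p <= q.
  rewrite -subge0; apply: le_trans (hS 0%nat); apply: addge0; [exact: S_ge0|exact: ltW].
set t := tau k.+1 + g'.
have t0 : 0 <= t by apply: addge0; [exact: tau_ge0|exact: ltW].
have av : forall i x, (i < k.+1)%nat -> p <= x -> x <= q -> ~ (c i <= x /\ x <= e i).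
  move=> i x; rewrite ltnS leq_eqVlt => /orP[/eqP->|ik] px xq; first exact: hav.
  by apply: h5 => //; [exact: le_trans up px|exact: le_trans xq qv].
have jp : j1 < p := lt_le_trans h1 up.
case: (leP (q - p) (t + t)) => hqp.
  exists (St k.+1 p q g'); split=> //=; split=> //; first exact: le_lt_trans qv h3.
have tq : p + t <= q.
  have : p + t <= p + (q - p).
    by rewrite leD2l; apply: le_trans (ltW hqp); rewrite -{1}(addr0 t) leD2l.
  by rewrite (addrC p (q - p)) subrK.
exists (St k.+1 p (p + t) g'); split=> //=.
- split=> //.
  + by rewrite -{1}(addr0 p) leD2l.
  + exact: le_lt_trans tq (le_lt_trans qv h3).
  + split.
      move=> i x hi px xq; apply: av => //; exact: le_trans xq tq.
    move=> N; rewrite (addrC p t) addrK /t leD2r; exact: tailb.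
- exact: le_trans tq qv.
- split=> //; rewrite (addrC p t) addrK -{1}(addr0 t) leD2l //.
Qed.
Lemma step (s : st) : Inv s -> exists s', Next s s'.
Proof.
case: s => k u v g Hinv; have := Hinv; rewrite /Inv /= => -[h1 h2 h3 h4 [h5 h6]].
set g' := Order.min (quarter g) (delta k.+1%:R).
have g0 : 0 < g' by rewrite lt_min quarter_gt0 // delta_gt0.
have gq : g' <= quarter g by rewrite ge_min lexx.
have gd : g' <= delta k.+1%:R by rewrite ge_min lexx orbT.
have g4 : g' + g' + (g' + g') <= g.
  apply: (le_trans (y := quarter g + quarter g + (quarter g + quarter g))).
    by repeat apply: leD.
  by rewrite addrA quarterK.
set a := Order.min v (Order.max u (c k - g')).
set b := Order.max a (Order.min v (e k + g')).
have ua : u <= a by rewrite le_min h2 le_max lexx.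
have av : a <= v by rewrite ge_min lexx.
have ab : a <= b by rewrite le_max lexx.
have bv : b <= v by rewrite ge_max av ge_min lexx.
have mid : b - a <= mu (c k) (e k) u v + (g' + g').
  by have := middle_len (c k) (e k) h2 (ltW g0).
set M := mu (c k) (e k) u v.
have key : forall N, S k.+1 u a N + S k.+1 b v N + (g' + g') <= (a - u) + (v - b).
  move=> N; have hN := h6 N.+1; rewrite S_step -/M in hN.
  have spl : S k.+1 u a N + S k.+1 b v N <= S k.+1 u v N.
    rewrite /S -LCpsumD; apply: psum_le => i.
    rewrite (mu_add _ _ ua (le_trans ab bv)) (mu_add _ _ ab bv) leD2l.
    by rewrite -{1}(add0r (mu _ _ b v)) leD2r mu_ge0.
  rewrite -(leD2r (M + (g' + g'))).
  apply: (le_trans (y := S k.+1 u v N + M + g)).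
    have -> : S k.+1 u a N + S k.+1 b v N + (g' + g') + (M + (g' + g')) =
      (S k.+1 u a N + S k.+1 b v N) + M + (g' + g' + (g' + g')) by lceq.
    by apply: leD => //; apply: leD.
  rewrite (addrC (S k.+1 u v N) M); apply: le_trans hN _.
  have -> : v - u = (a - u) + (v - b) + (b - a) by lceq.
  by rewrite leD2l.
have mL : forall N N', leq N N' -> S k.+1 u a N <= S k.+1 u a N' by move=> *; exact: S_mono.
have mR : forall N N', leq N N' -> S k.+1 b v N <= S k.+1 b v N' by move=> *; exact: S_mono.
case: (pick2 mL mR key) => hP.
- apply: (finish (s := St k u v g) (p := u) (q := a) (g' := g')) => //=.
  move=> x ux xa [cx _].
  have ua' : u < a.
    rewrite -subgt0; apply: lt_le_trans (hP 0%nat).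
    by rewrite /S LCpsum0 add0r.
  have : a <= Order.max u (c k - g') by rewrite ge_min lexx orbT.
  rewrite le_max leNgt ua' /= => ac.
  have : x < c k.
    apply: le_lt_trans (le_trans xa ac) _.
    by rewrite -{2}(subr0 (c k)) ltD2l LCltrN2.
  by rewrite ltNge cx.
- apply: (finish (s := St k u v g) (p := b) (q := v) (g' := g')) => //=.
    exact: le_trans ua ab.
  move=> x bx xv [_ xe].
  have bv' : b < v.
    rewrite -subgt0; apply: lt_le_trans (hP 0%nat).
    by rewrite /S LCpsum0 add0r.
  have : Order.min v (e k + g') <= b by rewrite le_max lexx orbT.
  rewrite ge_min leNgt bv' /= => eb.
  have : e k < x.
    apply: lt_le_trans _ (le_trans eb bx).
    by rewrite -{1}(addr0 (e k)) ltD2l.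
  by rewrite ltNge xe.
Qed.
Lemma tau_tendsto0 : tendsto0 tau.
Proof.
move: hT => /seriesA h q; have [N hN] := h q; exists N => n hn p hp.
by rewrite /tau LCcB -(hN n hn p hp) subrr LCc0.
Qed.

Lemma core_le :
  (forall x, j1 < x -> x < j2 -> exists i, c i <= x /\ x <= e i) -> j2 - j1 <= T.
Proof.
move=> cov; rewrite leNgt; apply/negP => hlt.
set g0 := quarter (j2 - j1 - T).
have g0p : 0 < g0 by apply: quarter_gt0; rewrite subgt0.
have T0 : 0 <= T by apply: series_ge0 hT => i; exact: hlen_ge0.
pose s0 := St 0 (j1 + g0) (j2 - g0) g0.
have e0 : j2 - g0 - (j1 + g0) = T + (g0 + g0).
  have hq : g0 + g0 + g0 + g0 = j2 - j1 - T by exact: quarterK.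
  have -> : j2 - g0 - (j1 + g0) = (j2 - j1 - T) + T - (g0 + g0) by lceq.
  rewrite -hq; lceq.
have I0 : Inv s0.
  rewrite /Inv /=; split.
  - by rewrite -{1}(addr0 j1) ltD2l.
  - by rewrite -subge0 e0; apply: addge0 => //; apply: addge0; exact: ltW.
  - by rewrite -{2}(subr0 j2) ltD2l LCltrN2.
  - exact: g0p.
  - split => // N; rewrite e0.
    apply: le_trans (leD (tailb 0 _ _ N) (lexx g0)) _.
    rewrite /tau LCpsum0 subr0 leD2l -{1}(addr0 g0) leD2l; exact: ltW.
have /choice [F hF] : forall s, exists s', Inv s -> Next s s'.
  move=> s; case: (pselect (Inv s)) => h; last by exists s.
  by have [s' hs'] := step h; exists s'.
pose stn n := iter n F s0.
have Hn : forall n, Inv (stn n) /\ sk (stn n) = n.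
  elim=> [|n [IH1 IH2]] //=.
  have [? e1 _ _ _] := hF _ IH1; by split=> //; rewrite e1 IH2.
have Nx : forall n, Next (stn n) (stn n.+1) by move=> n; exact: hF _ (Hn n).1.
pose U n := su (stn n); pose V n := sv (stn n).
have UV : forall n, U n <= V n by move=> n; have [_ h _ _ _] := (Hn n).1.
have Ui : forall n m, leq n m -> U n <= U m.
  move=> n m /subnKC <-; elim: (m - n)%nat => [|k IH]; first by rewrite addn0.
  by apply: le_trans IH _; rewrite addnS; have [_ _ h _ _] := Nx (n + k)%nat.
have Vd : forall n m, leq n m -> V m <= V n.
  move=> n m /subnKC <-; elim: (m - n)%nat => [|k IH]; first by rewrite addn0.
  by apply: le_trans _ IH; rewrite addnS; have [_ _ _ h _] := Nx (n + k)%nat.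
pose bnd n := (tau n + delta n%:R) + (tau n + delta n%:R).
have bnd0 : tendsto0 (fun n => bnd n.+1).
  have h := cvgA_D (cvgA_D tau_tendsto0 delta_tendsto0) (cvgA_D tau_tendsto0 delta_tendsto0).
  rewrite !addr0 in h.
  by move=> q; have [N hN] := h q; exists N => n hn; apply: hN; exact: leqW.
have lenb : forall n, V n.+1 - U n.+1 <= bnd n.+1.
  move=> n; have [_ e1 _ _ [h1 h2]] := Nx n.
  rewrite /V /U; apply: le_trans h1 _; rewrite (Hn n.+1).2 in h2 *.
  by apply: leD; apply: leD.
have len0 : tendsto0 (fun n => V n.+1 - U n.+1).
  apply: tendsto0_squeeze bnd0 => n; last exact: lenb.
  by rewrite subge0.
have cau : cauchyA U.
  move=> q; have [N hN] := len0 q; exists N.+1.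
  have aux : forall n m, leq N.+1 n -> leq n m -> agree (U m) (U n) q.
    move=> n m hn hm.
    have h0 : agree (U m - U n) 0 q.
      apply: (agree0_le (y := V n - U n)).
      - by rewrite subge0; exact: Ui.
      - rewrite leD2r; exact: le_trans (UV m) (Vd _ _ hm).
      - case: n hn hm => // n hn hm; exact: hN.
    by move=> p hp; move: (h0 p hp); rewrite LCcB LCc0 => /eqP; rewrite subr_eq0 => /eqP.
  move=> n m hn hm; case: (leqP n m) => h.
    exact: agree_sym (aux n m hn h).
  exact: aux m n hm (ltnW h).
have [P hP] := cauchy_cvg cau.
have PU : forall n, U n <= P.
  move=> n; apply: (cvg_ge (N0 := n) hP) => m hm; exact: Ui.
have PV : forall n, P <= V n.
  move=> n; apply: (cvg_le (N0 := n) hP) => m hm; exact: le_trans (UV m) (Vd _ _ hm).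
have [i [ci ie]] : exists i, c i <= P /\ P <= e i.
  apply: cov.
    have [h _ _ _ _] := (Hn 0%nat).1; exact: lt_le_trans h (PU 0%nat).
  have [_ _ h _ _] := (Hn 0%nat).1; exact: le_lt_trans (PV 0%nat) h.
have [_ _ _ _ [h5 _]] := (Hn i.+1).1.
apply: (h5 i P) => //; first by rewrite (Hn i.+1).2.
- exact: PU.
- exact: PV.
Qed.
End Core.


Lemma iset_bounds (J : LCinterval) x : iset J x -> ileft J <= x /\ x <= iright J.
Proof.
case: J => a b [] ab /=; rewrite /iset /=.
- by move=> [/LCleP h1 /LCleP h2].
- by move=> [/LCleP h1 /LCltP h2]; split=> //; exact: ltW.
- by move=> [/LCltP h1 /LCleP h2]; split=> //; exact: ltW.
- by move=> [/LCltP h1 /LCltP h2]; split; exact: ltW.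
Qed.

Lemma iset_int (J : LCinterval) x : ileft J < x -> x < iright J -> iset J x.
Proof.
case: J => a b [] ab /=; rewrite /iset /= => h1 h2.
- by split; apply/LCleP; exact: ltW.
- by split; [apply/LCleP; exact: ltW|apply/LCltP].
- by split; [apply/LCltP|apply/LCleP; exact: ltW].
- by split; apply/LCltP.
Qed.

Lemma ilen_lt (J : LCinterval) : ileft J < iright J.
Proof. by apply/LCltP; exact: iltP. Qed.

Lemma ilenE (J : LCinterval) : ilen J = iright J - ileft J. Proof. by []. Qed.

Lemma ilen_gt0 (J : LCinterval) : 0 < ilen J.
Proof. by rewrite ilenE subgt0 ilen_lt. Qed.

Lemma ilen_hlen (J : LCinterval) : ilen J = hlen (ileft J) (iright J).
Proof. by rewrite hlen_id // ltW // ilen_lt. Qed.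

Lemma seg_lt (a b w : LC) : 0 < w -> LClt a (Order.max a b + w).
Proof.
move=> w0; apply/LCltP; apply: le_lt_trans (maxc_ge a b) _.
by rewrite -{1}(addr0 (Order.max a b)) ltD2l.
Qed.
Definition seg (a b w : LC) (h : 0 < w) : LCinterval := MkInterval CC (seg_lt a b h).

Lemma seg_len a b w (h : 0 < w) : ilen (seg a b h) = hlen a b + w.
Proof. by rewrite ilenE /= -maxsub_le; lceq. Qed.

Lemma seg_mem a b w (h : 0 < w) x : a <= x -> x <= b -> iset (seg a b h) x.
Proof.
move=> ax xb; rewrite /iset /=; split; apply/LCleP => //.
apply: le_trans (_ : Order.max a b <= _); first exact: le_trans xb (maxp_ge a b).
by rewrite -{1}(addr0 (Order.max a b)) leD2l ltW.
Qed.

Lemma delta_off_tendsto0 (r : rat) : tendsto0 (fun n : nat => delta (r + n%:R)).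
Proof.
move=> q; exists (Num.bound `|q - r|) => n hn p hp.
rewrite deltaE LCc0; case: eqP => // e; exfalso.
have : q - r < n%:R.
  apply: le_lt_trans (ler_norm _) _; apply: lt_le_trans (archi_boundP (normr_ge0 _)) _.
  by rewrite ler_nat.
by rewrite ltrBlDl -e ltNge hp.
Qed.

Lemma series_small (w : nat -> LC) W q : LCseries w W ->
  (forall k, agree (w k) 0 q) -> agree W 0 q.
Proof.
move=> /seriesA hW h; have [N hN] := hW q.
have hp : forall n, agree (LCpsum w n) 0 q.
  elim=> [|n IH] p hp //=; by rewrite ?LCcD (IH p hp) (h n p hp) ?LCc0 addr0.
by move=> p hpq; rewrite -(hN N (leqnn _) p hpq) (hp N p hpq).
Qed.

Lemma lt_of_agree0 (x z : LC) q : 0 < z -> (forall p, p < q -> z p = 0) -> 0 < z q ->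
  agree x 0 q -> x < z.
Proof.
move=> _ hz hq hx; apply/LCltP; exists q; split; first by rewrite hx // LCc0.
by move=> p hp; rewrite hx ?LCc0 ?hz // ltW.
Qed.

Section Removal.
Variables (B : set LC) (C : nat -> LCinterval) (T : LC) (J : LCinterval) (rho : LC).
Hypotheses (hC : cover_with_sum B C T) (hJ : iset J `<=` B) (rho0 : 0 < rho).

Let c k := ileft (C k).
Let e k := iright (C k).
Let j1 := ileft J.
Let j2 := iright J.
Let lenL k := mu (c k) (e k) (c k) j1.
Let lenM k := mu (c k) (e k) j1 j2.
Let lenR k := mu (c k) (e k) j2 (e k).

Lemma len_tendsto (f : nat -> LC) : (forall k, 0 <= f k) -> (forall k, f k <= ilen (C k)) ->
  exists s, LCseries f s.
Proof.
move=> h0 h1; apply: series_cvg; apply: (tendsto0_squeeze h0 h1).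
by case: hC => _ hs; exact: series_terms hs.
Qed.

Lemma removal : exists D s, cover_with_sum (B `\` iset J) D s /\ s <= T - ilen J + rho.
Proof.
case: hC => hcov hser.
have cle k : c k <= e k by rewrite ltW // ilen_lt.
have mle : forall p q k, mu (c k) (e k) p q <= ilen (C k).
  by move=> p q k; rewrite ilen_hlen; exact: mu_le_len.
have [SL hSL] := len_tendsto (f := lenL) (fun k => mu_ge0 _ _ _ _) (fun k => mle _ _ k).
have [SM hSM] := len_tendsto (f := lenM) (fun k => mu_ge0 _ _ _ _) (fun k => mle _ _ k).
have [SR hSR] := len_tendsto (f := lenR) (fun k => mu_ge0 _ _ _ _) (fun k => mle _ _ k).
have j12 : j1 <= j2 by rewrite ltW // ilen_lt.
have hsum : SL + SM + SR = T.
  apply: (series_unique (u := fun k => lenL k + lenM k + lenR k)).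
    exact: seriesD (seriesD hSL hSM) hSR.
  apply: series_ext hser => k; rewrite ilenE -/(c k) -/(e k).
  by rewrite /lenL /lenM /lenR mu_split3.
have hcore : j2 - j1 <= SM.
  apply: (core_le (c := fun k => Order.max (c k) j1) (e := fun k => Order.min (e k) j2) hSM).
  move=> x h1 h2; have Bx : B x by apply: hJ; exact: iset_int.
  have [k _ hk] := hcov x Bx; have [ck ek] := iset_bounds hk.
  by exists k; split; [rewrite ge_max (ltW h1) andbT; exact: ck|rewrite le_min (ltW h2) andbT; exact: ek].
have /LCltP [q0 [hq0 eq0]] := rho0.
pose w k := delta (q0 + 1 + k%:R).
have w0 : forall k, 0 < w k by move=> k; exact: delta_gt0.
have [W hW] := series_cvg (delta_off_tendsto0 (q0 + 1)).
have Wa : agree W 0 q0.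
  apply: (series_small hW) => k p hp; rewrite deltaE LCc0; case: eqP => // ep.
  have : q0 < q0 + 1 + k%:R.
    by rewrite -addrA ltrDl; apply: lt_le_trans (ltr01) _; rewrite lerDl ler0n.
  by rewrite -ep ltNge hp.
have WW : W + W < rho.
  apply: (lt_of_agree0 (q := q0)) => //.
    by move=> p hp; rewrite -(eq0 p hp) LCc0.
  by move=> p hp; rewrite LCcD Wa // LCc0 addr0.
pose segL k := seg (c k) (Order.min (e k) j1) (w0 k).
pose segR k := seg (Order.max (c k) j2) (e k) (w0 k).
pose D n := if odd n then segR n./2 else segL n./2.
exists D, ((SL + W) + (SR + W)); split; first split.
- move=> x [Bx nJx]; have [k _ hk] := hcov x Bx; have [ck ek] := iset_bounds hk.
  case: (leP x j1) => h1.
    exists (k.*2) => //; rewrite /D odd_double half_dbl.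
    by apply: seg_mem => //; rewrite le_min ek h1.
  case: (leP j2 x) => h2.
    exists (k.*2).+1 => //; rewrite /D /= odd_double /= uphalf_double.
    by apply: seg_mem => //; rewrite ge_max ck h2.
  by case: nJx; exact: iset_int.
- apply: (series_ext (u := interleave (fun k => lenL k + w k) (fun k => lenR k + w k))).
    move=> n; rewrite /D /interleave; case: (odd n).
      by rewrite /segR seg_len /lenR /mu minxx.
    by rewrite /segL seg_len /lenL /mu maxxx.
  apply: series_interleave; exact: seriesD.
- have -> : SL + W + (SR + W) = (T - SM) + (W + W) by rewrite -hsum; lceq.
  apply: leD; last exact: ltW.
  by rewrite leD2l LClerN2 ilenE.
Qed.
End Removal.


Lemma quarter2 (x : LC) : 0 < x -> quarter x + quarter x <= x.
Proof.
move=> h; rewrite -[X in _ <= X](quarterK x) -addrA.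
rewrite -{1}(addr0 (quarter x + quarter x)) leD2l.
by apply: addge0; apply: ltW; exact: quarter_gt0.
Qed.

Theorem mainTheorem7 (A : set LC) (mA : LC) (I : nat -> LCinterval) :
  outer_measure_is A mA ->
  (forall m n : nat, m <> n -> iset (I m) `&` iset (I n) = set0) ->
  (forall n : nat, A `&` iset (I n) = set0) ->
  LCcvg (fun n => ilen (I n)) LC0 ->
  exists sI : LC,
    LCseries (fun n => ilen (I n)) sI /\
    outer_measure_is (A `|` \bigcup_n iset (I n)) (LCadd mA sI).
Proof.
move=> [lbA glbA] disj Adisj hI.
have t0 : tendsto0 (fun n => ilen (I n)) by apply/cvgP.
have [sI hsI] := series_cvg t0.
exists sI; split => //; rewrite LCaddE; split.
- move=> s [C hC]; apply/LCleP; rewrite leNgt; apply/negP => hlt.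
  set Dl := mA + sI - s.
  have Dl0 : 0 < Dl by rewrite /Dl subgt0.
  set r := quarter Dl.
  have r0 : 0 < r by exact: quarter_gt0.
  pose B n := A `|` [set x | exists2 m, leq n m & iset (I m) x].
  have claim : forall n r', 0 < r' -> exists D s', cover_with_sum (B n) D s' /\
      s' <= s - LCpsum (fun n => ilen (I n)) n + r'.
    elim=> [|n IH] r' hr'.
      exists C, s; split.
        case: hC => hc hs; split => // x [Ax|[m _ hm]]; apply: hc; [left|right] => //.
        by exists m.
      by rewrite LCpsum0 subr0 -{1}(addr0 s) leD2l ltW.
    have [D [s' [hD hs']]] := IH (quarter r') (quarter_gt0 hr').
    have sub : iset (I n) `<=` B n by move=> x hx; right; exists n.
    have [D' [s'' [[hc hs] hs'']]] := removal hD sub (quarter_gt0 hr').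
    exists D', s''; split.
      split=> // x hx; apply: hc; split.
        case: hx => [Ax|[m hm hx]]; [by left|right; exists m => //; exact: ltnW].
      move=> hIn; case: hx => [Ax|[m hm hx]].
        by have := Adisj n; rewrite -subset0 => /(_ x) /=; apply.
      have nm : m <> n by move=> e; rewrite e ltnn in hm.
      by have := disj m n nm; rewrite -subset0 => /(_ x) /=; apply.
    apply: le_trans hs'' _; rewrite LCpsumE.
    apply: (le_trans (y := s - LCpsum (fun n => ilen (I n)) n + quarter r' - ilen (I n) + quarter r')).
      by apply: leD => //; apply: leD.
    have -> : s - LCpsum (fun n => ilen (I n)) n + quarter r' - ilen (I n) + quarter r' =
      s - (LCpsum (fun n => ilen (I n)) n + ilen (I n)) + (quarter r' + quarter r') by lceq.
    by rewrite leD2l quarter2.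
  have [q1 hq1] : exists q, forall x, agree x 0 q -> LClt x r.
    by apply: gt_agree; apply/LCltP.
  have [N hN] := (proj1 (seriesA _ _) hsI) q1.
  have small : sI - LCpsum (fun n => ilen (I n)) N < r.
    apply/LCltP; apply: hq1 => p hp.
    by rewrite LCcB (hN N (leqnn _) p hp) subrr LCc0.
  have [D [s' [[hc hs] hs']]] := claim N r r0.
  have : LCle mA s'.
    apply: lbA; exists D; split=> // x Ax; apply: hc; by left.
  move/LCleP; apply/negP; rewrite -ltNge.
  apply: le_lt_trans hs' _.
  have -> : s - LCpsum (fun n => ilen (I n)) N + r =
    (s - sI) + (sI - LCpsum (fun n => ilen (I n)) N) + r by lceq.
  apply: (lt_le_trans (y := (s - sI) + r + r)).
    by rewrite ltD2r ltD2l.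
  have -> : mA = (s - sI) + Dl by rewrite /Dl; lceq.
  by rewrite -addrA leD2l quarter2.
- move=> m' hm'.
  have : LCle (m' - sI) mA.
    apply: glbA => s [S [hc hs]]; apply/LCleP.
    pose D n := if odd n then I n./2 else S n./2.
    have hD : cover_with_sum (A `|` \bigcup_n iset (I n)) D (s + sI).
      split.
        move=> x [Ax|[n _ hn]].
          have [k _ hk] := hc x Ax.
          by exists (k.*2) => //; rewrite /D odd_double half_dbl.
        by exists (n.*2).+1 => //; rewrite /D /= odd_double /= uphalf_double.
      apply: (series_ext (u := interleave (fun k => ilen (S k)) (fun k => ilen (I k)))).
        by move=> n; rewrite /D /interleave; case: (odd n).
      exact: series_interleave.
    have /LCleP := hm' _ (ex_intro _ D hD).
    by rewrite -(leD2r sI (m' - sI)) subrK.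
  move/LCleP => h; apply/LCleP.
  by move: h; rewrite -(leD2r sI (m' - sI)) subrK.
Qed.
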